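(* Let $\mathcal A$ be a group (not necessarily finitely generated) and let $\mathcal H$ be a proper subgroup of $\mathcal A$. Then there exists a generating system $X$ of $\mathcal A$ such that $X\cap\mathcal H=\emptyset$ and $|X|=\mathrm{rank}(\mathcal A)$.
   Context: $\mathrm{rank}(\mathcal A)$ is the minimal cardinality of a generating set of $\mathcal A$. *)

(* Defs.v *)
From HB Require Import structures.
From mathcomp Require Import all_boot.
From mathcomp Require Import classical_sets cardinality.
Set Implicit Arguments. Unset Strict Implicit. Unset Printing Implicit Defensive.

Local Open Scope classical_set_scope.
Local Open Scope group_scope.

Definition is_subgroup (G : groupType) (H : set G) : Prop :=
  H 1 /\ (forall x y, H x -> H y -> H (x * y)) /\ (forall x, H x -> H x^-1).

Definition gen_subgroup (G : groupType) (X : set G) : set G :=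
  [set g | forall K : set G, is_subgroup K -> X `<=` K -> K g].

Definition generates (G : groupType) (X : set G) : Prop :=
  gen_subgroup X = [set: G].

Definition card_is_rank (G : groupType) (X : set G) : Prop :=
  generates X /\ (forall Y : set G, generates Y -> (X #<= Y)%card).

(* Main.v *)
Require Import Defs.
From HB Require Import structures.
From mathcomp Require Import all_boot.
From mathcomp Require Import classical_sets cardinality.
From mathcomp Require Import boolp functions.
From Stdlib Require Import Classical.
Local Open Scope classical_set_scope.

Section Aux.
Variable G : groupType.
Local Open Scope group_scope.

Lemma genT : generates [set: G].
Proof. by apply/seteqP; split=> // g _ K _ /(_ g I). Qed.

Definition Pgood (S : set (set G -> G)) :=
  (forall f, S f -> forall Y, generates Y -> Y (f Y)) /\
  (forall Y, generates Y -> forall f g, S f -> S g -> f Y = g Y -> f = g).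

Lemma min_gen : exists Y0 : set G, generates Y0 /\
  forall Y : set G, generates Y -> (Y0 #<= Y)%card.
Proof.
have [S0 [[S0v S0i] S0max]] : exists A, Pgood A /\ forall B, A `<` B -> ~ Pgood B.
  apply: Zorn_bigcup => F FP Ftot; split.
    by move=> f [A FA Af] Y gY; exact: (FP A FA).1 f Af Y gY.
  move=> Y gY f g [A FA Af] [B FB Bg].
  have [AB|BA] := Ftot A B FA FB.
    by apply: (FP B FB).2 => //; exact: AB.
  by apply: (FP A FA).2 => //; exact: BA.
have [[Y0 [gY0 surj]]|nex] := classic (exists Y0 : set G, generates Y0 /\
   forall y, Y0 y -> exists f, S0 f /\ f Y0 = y).
  exists Y0; split=> // Y gY.
  have [pk Hpk'] : exists pk : G -> (set G -> G), forall y, Y0 y -> S0 (pk y) /\ pk y Y0 = y.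
    have H0 : forall y, exists f : set G -> G, Y0 y -> S0 f /\ f Y0 = y.
      move=> y; have [Hy|nHy] := classic (Y0 y); last by exists (fun _ => 1%g).
      by have [f Hf] := surj y Hy; exists f.
    have [pk0 Hpk0] := choice H0.
    by exists pk0.
  have [g] : $|{injfun Y0 >-> Y}|.
    apply/injfunPex; exists (fun y => pk y Y).
      by move=> y Hy; apply: S0v (Hpk' y Hy).1 Y gY.
    move=> x y; rewrite !inE => Hx Hy Exy.
    have Ef := S0i Y gY _ _ (Hpk' x Hx).1 (Hpk' y Hy).1 Exy.
    by rewrite -(Hpk' x Hx).2 -(Hpk' y Hy).2 Ef.
  exact: inj_card_le g.
exfalso.
have hex : forall Y : set G, exists a : G, generates Y ->
    Y a /\ forall f, S0 f -> f Y <> a.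
  move=> Y; have [gY|ngY] := classic (generates Y); last by exists 1.
  apply: NNPP => H; apply: nex; exists Y; split=> // y Yy.
  apply: NNPP => Hn; apply: H; exists y => _; split=> // f S0f Efy.
  by apply: Hn; exists f.
have [h Hh] := choice hex.
have hS0 : ~ S0 h by move=> S0h; apply: ((Hh _ genT).2 h S0h).
apply: (S0max (S0 `|` [set h])).
  split; first by move=> f Hf; left.
  by move=> /(_ h (or_intror erefl)).
split.
  move=> f [S0f|->] Y gY; [exact: (S0v f S0f Y gY)|exact: (Hh Y gY).1].
move=> Y gY f g [S0f|->] [S0g|->] E //.
- exact: S0i Y gY f g S0f S0g E.
- by exfalso; exact: (Hh Y gY).2 f S0f E.
- by exfalso; exact: (Hh Y gY).2 g S0g (esym E).
Qed.

End Aux.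

Theorem lemma6p2 (G : groupType) (H : set G) :
  is_subgroup H -> H <> [set: G] ->
  exists X : set G, generates X /\ X `&` H = set0 /\ card_is_rank X.
Proof.
move=> [H1 [HM HV]] HT.
have [Y0 [gY0 minY0]] := min_gen G.
have [y0 [Y0y0 nHy0]] : exists y0, Y0 y0 /\ ~ H y0.
  apply: NNPP => Hn; apply: HT; apply/seteqP; split=> // g _.
  have : gen_subgroup Y0 g by rewrite gY0.
  apply; first by split.
  move=> y Yy; apply: NNPP => nH; apply: Hn; by exists y.
pose f := fun y : G => if pselect (H y) then (y * y0)%g else y.
have fy0 : f y0 = y0 by rewrite /f; case: pselect.
have gX : generates (f @` Y0).
  apply/seteqP; split=> // g _ K Ksub XK.
  have : gen_subgroup Y0 g by rewrite gY0.
  apply=> // y Yy.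
  have Ky0 : K y0 by apply: XK; exists y0 => //.
  have Kfy := XK (f y) (ex_intro2 _ _ y Yy erefl).
  have [Hy|nHy] := classic (H y); last first.
    by move: Kfy; rewrite /f; case: pselect.
  have Kyy0 : K (y * y0)%g by move: Kfy; rewrite /f; case: pselect.
  have E : y = (y * y0 * y0^-1)%g by move: Kyy0 => _; rewrite mulgK.
  by rewrite E; apply: Ksub.2.1 => //; apply: Ksub.2.2.
exists (f @` Y0); split=> //; split.
  apply/seteqP; split=> // _ [[y Yy <-]]; rewrite /f; case: pselect => // Hy Hyy0.
  apply: nHy0; have E : y0 = (y^-1 * (y * y0))%g by move: Hyy0 => _; rewrite mulKg.
  by rewrite E; apply: HM => //; apply: HV.
split=> // Y gY.
apply: card_le_trans (card_image_le f Y0) (minY0 Y gY).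
Qed.
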